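(* Let $F'_X\le F_X$ and $F_Z$ be distribution functions, and let $\phi'$ and $\phi$ be the canonical generators of $(F'_X,F_Z)$ and $(F_X,F_Z)$ respectively. Then $\phi'\le\phi$ pointwise on $[0,1]$.
   Context: A distribution function is a non-decreasing map $F:\mathbb R\to[0,1]$ (no right-continuity assumed) with limits $0$ at $-\infty$ and $1$ at $+\infty$; $f(x\pm)$ denote one-sided limits. The canonical generator $\phi$ of $(F_X,F_Z)$: with $F=F_XF_Z$, $\phi(0)=0$, $\phi(1)=1$, and for $u\in(0,1)$ choose $x_0$ with $F(x_0-)\le u\le F(x_0+)$, set $u_-=F(x_0-)$, $u_l=F_X(x_0-)F_Z(x_0)$, $u_u=F_X(x_0+)F_Z(x_0)$, $u_+=F(x_0+)$, and $\phi(u)=F_X(x_0-)$ if $u_-\le u\le u_l$, $\phi(u)=u/F_Z(x_0)$ if $u_l\le u\le u_u$, $\phi(u)=F_X(x_0+)$ if $u_u\le u\le u_+$ (this is independent of the choices). *)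

(* Defs.v *)
From HB Require Import structures.
From mathcomp Require Import all_boot all_order all_algebra.
From mathcomp Require Import all_classical all_reals topology normedtype.
Set Implicit Arguments. Unset Strict Implicit. Unset Printing Implicit Defensive.
Import Order.TTheory GRing.Theory Num.Theory.
Import numFieldNormedType.Exports.
Local Open Scope classical_set_scope.
Local Open Scope ring_scope.

Section Defs.
Variable R : realType.

(* A distribution function: non-decreasing, values in [0,1], limit 0 at -oo
   and 1 at +oo (no right-continuity assumed). *)
Definition distribution_function (F : R -> R) : Prop :=
  [/\ {homo F : x y / x <= y},
      (forall x, 0 <= F x <= 1),
      F x @[x --> -oo] --> (0 : R) &
      F x @[x --> +oo] --> (1 : R)].

Definition lim_left (f : R -> R) (x : R) : R := lim (f @ x^'-).
Definition lim_right (f : R -> R) (x : R) : R := lim (f @ x^'+).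

Definition canonical_generator (FX FZ : R -> R) (u : R) : R :=
  if u == 0 then 0 else if u == 1 then 1 else
  let F := fun x => FX x * FZ x in
  let x0 := xget 0 [set x | lim_left F x <= u <= lim_right F x] in
  let ul := lim_left FX x0 * FZ x0 in
  let uu := lim_right FX x0 * FZ x0 in
  if u <= ul then lim_left FX x0
  else if u <= uu then u / FZ x0
  else lim_right FX x0.

End Defs.

(* Main.v *)
Require Import Defs.
From HB Require Import structures.
From mathcomp Require Import all_boot all_order all_algebra.
From mathcomp Require Import all_classical all_reals topology normedtype realfun.
From mathcomp Require Import lra.
Import Order.TTheory GRing.Theory Num.Theory.
Import numFieldNormedType.Exports.
Local Open Scope classical_set_scope.
Local Open Scope ring_scope.

Section H.
Variable R : realType.
Implicit Types f g : R -> R.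

Lemma cvgL f x : {homo f : a b / a <= b} -> cvg (f @ x^'-).
Proof.
move=> nd; apply: nondecreasing_at_left_is_cvgr.
- by near=> y => a b _ _ ab; exact: nd.
- near=> y; exists (f x) => _ /= [s sx <-]; apply: nd.
  by move: sx; rewrite in_itv/= => /andP[_ /ltW].
Unshelve. all: by end_near. Qed.

Lemma cvgRt f x : {homo f : a b / a <= b} -> cvg (f @ x^'+).
Proof.
move=> nd; apply: nondecreasing_at_right_is_cvgr.
- by near=> y => a b _ _ ab; exact: nd.
- near=> y; exists (f x) => _ /= [s sx <-]; apply: nd.
  by move: sx; rewrite in_itv/= => /andP[/ltW].
Unshelve. all: by end_near. Qed.

Lemma limL_ge f x y : {homo f : a b / a <= b} -> y < x -> f y <= lim_left f x.
Proof.
move=> nd yx; apply: limr_ge; first exact: cvgL.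
near=> t; apply: nd; apply/ltW; near: t; exact: nbhs_left_gt.
Unshelve. all: by end_near. Qed.

Lemma limL_le f x c : {homo f : a b / a <= b} -> (forall y, y < x -> f y <= c) ->
  lim_left f x <= c.
Proof.
move=> nd H; apply: limr_le; first exact: cvgL.
near=> t; apply: H; near: t; exact: nbhs_left_lt.
Unshelve. all: by end_near. Qed.

Lemma limR_le f x y : {homo f : a b / a <= b} -> x < y -> lim_right f x <= f y.
Proof.
move=> nd yx; apply: limr_le; first exact: cvgRt.
near=> t; apply: nd; apply/ltW; near: t; exact: nbhs_right_lt.
Unshelve. all: by end_near. Qed.

Lemma limR_ge f x c : {homo f : a b / a <= b} -> (forall y, x < y -> c <= f y) ->
  c <= lim_right f x.
Proof.
move=> nd H; apply: limr_ge; first exact: cvgRt.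
near=> t; apply: H; near: t; exact: nbhs_right_gt.
Unshelve. all: by end_near. Qed.

Lemma limL_M f g x : {homo f : a b / a <= b} -> {homo g : a b / a <= b} ->
  lim_left (fun t => f t * g t) x = lim_left f x * lim_left g x.
Proof.
move=> nf ng; apply: cvg_lim => //; apply: cvgM; exact: cvgL.
Qed.

Lemma limR_M f g x : {homo f : a b / a <= b} -> {homo g : a b / a <= b} ->
  lim_right (fun t => f t * g t) x = lim_right f x * lim_right g x.
Proof.
move=> nf ng; apply: cvg_lim => //; apply: cvgM; exact: cvgRt.
Qed.


Lemma homoM f g : {homo f : a b / a <= b} -> {homo g : a b / a <= b} ->
  (forall x, 0 <= f x) -> (forall x, 0 <= g x) ->
  {homo (fun t => f t * g t) : a b / a <= b}.
Proof. by move=> nf ng f0 g0 a b ab; apply: ler_pM => //; [exact: nf|exact: ng]. Qed.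

Lemma exist_x0 f u : {homo f : a b / a <= b} ->
  f x @[x --> -oo] --> (0 : R) -> f x @[x --> +oo] --> (1 : R) ->
  0 < u -> u < 1 -> exists x, lim_left f x <= u <= lim_right f x.
Proof.
move=> nd f0 f1 u0 u1.
have [a Ha] : exists a, f a < u.
  have H : \forall t \near -oo, f t < u by apply: cvgr_lt; [exact: f0|exact: u0]. exact: (filter_ex H).
have [b Hb] : exists b, u < f b.
  have H : \forall t \near +oo, u < f t by apply: cvgr_gt; [exact: f1|exact: u1]. exact: (filter_ex H).
set A := [set x | f x < u].
have supA : has_sup A.
  split; first by exists a.
  exists b => x /= Ax; rewrite leNgt; apply/negP => bx.
  have := nd _ _ (ltW bx); rewrite leNgt => /negP; apply.
  exact: lt_trans Ax Hb.
exists (sup A); apply/andP; split.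
- apply: limL_le => // y ys.
  have e0 : 0 < sup A - y by rewrite subr_gt0.
  have [x Ax /= yx] := sup_adherent e0 supA.
  rewrite opprB addrC subrK in yx.
  exact: ltW (le_lt_trans (nd _ _ (ltW yx)) Ax).
- apply: limR_ge => // y sy; rewrite leNgt; apply/negP => fy.
  have := sup_upper_bound supA fy; rewrite leNgt sy //.
Qed.


Definition G (FX FZ : R -> R) (u x0 : R) : R :=
  if u <= lim_left FX x0 * FZ x0 then lim_left FX x0
  else if u <= lim_right FX x0 * FZ x0 then u / FZ x0
  else lim_right FX x0.

Section GP.
Variables (FX FZ : R -> R) (u x0 : R).
Hypotheses (nX : {homo FX : a b / a <= b}) (nZ : {homo FZ : a b / a <= b})
  (X0 : forall x, 0 <= FX x) (Z0 : forall x, 0 <= FZ x) (u0 : 0 < u).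



Lemma lL_ge0 f x : {homo f : a b / a <= b} -> (forall x, 0 <= f x) -> 0 <= lim_left f x.
Proof.
move=> nf f0; apply: le_trans (f0 (x - 1)) _; apply: limL_ge => //.
by rewrite ltrBlDr ltrDl.
Qed.

Lemma lL_le f x : {homo f : a b / a <= b} -> lim_left f x <= f x.
Proof. by move=> nf; apply: limL_le => // y /ltW; apply: nf. Qed.

Lemma lR_ge f x : {homo f : a b / a <= b} -> f x <= lim_right f x.
Proof. by move=> nf; apply: limR_ge => // y /ltW; apply: nf. Qed.

Lemma G_bounds : lim_left FX x0 <= G FX FZ u x0 <= lim_right FX x0.
Proof.
have ab : lim_left FX x0 <= lim_right FX x0 by apply: le_trans (lL_le FX x0 nX) (lR_ge FX x0 nX).
rewrite /G; case: ifPn => h1; first by rewrite lexx ab.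
case: ifPn => h2; last by rewrite ab lexx.
have z0 : 0 < FZ x0.
  rewrite lt_def Z0 andbT; apply/eqP => z0; move: h2; rewrite z0 mulr0.
  by rewrite leNgt u0.
rewrite ler_pdivlMr // ler_pdivrMr // h2 andbT; rewrite -ltNge in h1; exact: ltW.
Qed.

Lemma G_ge0 : 0 <= G FX FZ u x0.
Proof. by apply: le_trans (lL_ge0 FX x0 nX X0) (proj1 (andP G_bounds)). Qed.

Lemma G_up : lim_left (fun t => FX t * FZ t) x0 <= u ->
  forall y, y < x0 -> G FX FZ u x0 * FZ y <= u.
Proof.
rewrite limL_M // => hu y yx.
have zy : FZ y <= lim_left FZ x0 by apply: limL_ge.
have zy' : FZ y <= FZ x0 by apply: nZ; apply: ltW.
rewrite /G; case: ifPn => h1.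
  by apply: le_trans hu; apply: ler_wpM2l => //; apply: lL_ge0.
case: ifPn => h2.
  have z0 : 0 < FZ x0.
    rewrite lt_def Z0 andbT; apply/eqP => z0; move: h2; rewrite z0 mulr0.
    by rewrite leNgt u0.
  rewrite {2}(_ : u = u / FZ x0 * FZ x0); last by rewrite divfK // gt_eqF.
  apply: ler_wpM2l => //; apply: divr_ge0 => //; exact: ltW.
rewrite -ltNge in h2; apply: ltW; apply: le_lt_trans h2.
apply: ler_wpM2l => //; apply: le_trans (lR_ge FX x0 nX); exact: X0.
Qed.

Lemma G_low : u <= lim_right (fun t => FX t * FZ t) x0 ->
  forall y, x0 < y -> u <= G FX FZ u x0 * FZ y.
Proof.
rewrite limR_M // => hu y yx.
have zy : lim_right FZ x0 <= FZ y by apply: limR_le.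
have zy' : FZ x0 <= FZ y by apply: nZ; apply: ltW.
rewrite /G; case: ifPn => h1.
  by apply: le_trans h1 _; apply: ler_wpM2l => //; apply: lL_ge0.
case: ifPn => h2.
  have z0 : 0 < FZ x0.
    rewrite lt_def Z0 andbT; apply/eqP => z0; move: h2; rewrite z0 mulr0.
    by rewrite leNgt u0.
  rewrite {1}(_ : u = u / FZ x0 * FZ x0); last by rewrite divfK // gt_eqF.
  apply: ler_wpM2l => //; apply: divr_ge0 => //; exact: ltW.
apply: le_trans hu _; apply: ler_wpM2l => //.
apply: le_trans (lR_ge FX x0 nX); exact: X0.
Qed.

End GP.


Lemma clamp_mono (a' a b' b z u : R) : a' <= a -> b' <= b -> a' <= b' -> a <= b ->
  0 <= z -> 0 < u ->
  (if u <= a' * z then a' else if u <= b' * z then u / z else b') <=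
  (if u <= a * z then a else if u <= b * z then u / z else b).
Proof.
move=> aa bb ab' ab z0 u0.
have [zz|zp] := eqVneq z 0.
  by rewrite zz !mulr0 (_ : (u <= 0) = false) // leNgt u0.
have {z0 zp} zp : 0 < z by rewrite lt_def zp z0.
have [h1|h1] := leP u (a'*z); have [h2|h2] := leP u (a*z);
  have [h3|h3] := leP u (b'*z); have [h4|h4] := leP u (b*z) => //=;
  rewrite ?ler_pdivrMr ?ler_pdivlMr //; nra.
Qed.


Lemma gen_eq (FX FZ : R -> R) u : u != 0 -> u != 1 ->
  canonical_generator FX FZ u = G FX FZ u (xget 0 [set x |
    lim_left (fun x => FX x * FZ x) x <= u <= lim_right (fun x => FX x * FZ x) x]).
Proof. by move=> h0 h1; rewrite /canonical_generator (negbTE h0) (negbTE h1). Qed.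

Lemma mem_x0 (FX FZ : R -> R) u : distribution_function FX -> distribution_function FZ ->
  0 < u -> u < 1 ->
  forall F, F = (fun x => FX x * FZ x) ->
  lim_left F (xget 0 [set x | lim_left F x <= u <= lim_right F x]) <= u <=
  lim_right F (xget 0 [set x | lim_left F x <= u <= lim_right F x]).
Proof.
move=> [nX Xb f0 f1] [nZ Zb g0 g1] u0 u1 F ->.
have nF : {homo (fun x => FX x * FZ x) : a b / a <= b}.
  apply: homoM => // x; [by case/andP: (Xb x)|by case/andP: (Zb x)].
have F0 : FX x * FZ x @[x --> -oo] --> (0:R).
  rewrite -[X in _ --> X](mulr0 (0:R)); exact: cvgM f0 g0.
have F1 : FX x * FZ x @[x --> +oo] --> (1:R).
  rewrite -[X in _ --> X](mulr1 (1:R)); exact: cvgM f1 g1.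
have H := @exist_x0 _ u nF F0 F1 u0 u1.
exact: (xgetPex 0 H).
Qed.

End H.
Arguments mem_x0 {R FX FZ u}.
Arguments gen_eq {R}.
Arguments G_bounds {R FX}.
Arguments G_up {R FX FZ u x0}.
Arguments G_low {R FX FZ u x0}.
Arguments limR_le {R f x y}.
Arguments limL_ge {R f x y}.
Arguments limL_le {R f x c}.
Arguments limR_ge {R f x c}.
Arguments clamp_mono {R}.
Arguments lL_le {R}.
Arguments lR_ge {R}.

Theorem lemma1 (R : realType) (FX' FX FZ : R -> R) :
  distribution_function FX' -> distribution_function FX ->
  distribution_function FZ ->
  (forall x, FX' x <= FX x) ->
  forall u : R, 0 <= u <= 1 ->
  canonical_generator FX' FZ u <= canonical_generator FX FZ u.
Proof.
move=> dX' dX dZ le u /andP[u0 u1].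
have [->|un0] := eqVneq u 0; first by rewrite /canonical_generator eqxx.
have [->|un1] := eqVneq u 1.
  by rewrite /canonical_generator eqxx oner_eq0.
have u0' : 0 < u by rewrite lt_def un0.
have u1' : u < 1 by rewrite lt_def eq_sym un1 u1.
clear u0 u1; rename u0' into u0; rename u1' into u1.
rewrite !gen_eq //.
have m' := mem_x0 dX' dZ u0 u1 _ (erefl _).
have m := mem_x0 dX dZ u0 u1 _ (erefl _).
move: m' m.
set x0' := xget 0 _; set x0 := xget 0 _ => m' m.
case: dX' => nX' Xb' _ _; case: dX => nX Xb _ _; case: dZ => nZ Zb _ _.
have X0' x : 0 <= FX' x by case/andP: (Xb' x).
have X0 x : 0 <= FX x by case/andP: (Xb x).
have Z0 x : 0 <= FZ x by case/andP: (Zb x).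
have [lt|gt|eq] := ltgtP x0' x0.
- have [h1 h2] := midf_lt lt.
  apply: le_trans (proj2 (andP (G_bounds FZ u x0' nX' Z0 u0))) _.
  apply: le_trans (limR_le nX' h1) _.
  apply: le_trans (le _) _.
  apply: le_trans (limL_ge nX h2) _.
  exact: (proj1 (andP (G_bounds FZ u x0 nX Z0 u0))).
- have [h1 h2] := midf_lt gt. set y := (x0 + x0') / 2 in h1 h2.
  have A := G_up nX' nZ X0' Z0 u0 (proj1 (andP m')) _ h2.
  have B := G_low nX nZ X0 Z0 u0 (proj2 (andP m)) _ h1.
  have zp : 0 < FZ y.
    rewrite lt_def Z0 andbT; apply/eqP => z0; move: B; rewrite z0 mulr0.
    by rewrite leNgt u0.
  by rewrite -(ler_pM2r zp); apply: le_trans A B.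
- rewrite eq /G; apply: clamp_mono => //.
  + by apply: limL_le => // y yx; apply: le_trans (le y) (limL_ge nX yx).
  + by apply: limR_ge => // y yx; apply: le_trans (limR_le nX' yx) (le y).
  + exact: le_trans (lL_le FX' x0 nX') (lR_ge FX' x0 nX').
  + exact: le_trans (lL_le FX x0 nX) (lR_ge FX x0 nX).
Qed.
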